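(* Assume $k$ algebraically closed. Let $\mathfrak{sp}(W,\omega)=\{D\in\operatorname{End}(W)\mid \omega(Dx,y)+\omega(x,Dy)=0\ \forall x,y\}$, acting on $\operatorname{span}_k\{a\wedge b\}$ by $D(a\wedge b)=(Da)\wedge b+a\wedge(Db)$. Then the product $\odot_2$ (restricted to $\sigma(V)$) is not Lie invariant under $\mathfrak{sp}(W,\omega)$: there exist $D\in\mathfrak{sp}(W,\omega)$ and $u,v\in\sigma(V)$ with $D(u\odot_2 v)\neq D(u)\odot_2 v+u\odot_2 D(v)$. Consequently $\odot_2$ is not invariant under the symplectic group $\operatorname{Sp}(W,\omega)\cong\operatorname{Sp}_{56}$.
   Context: Let $k$ be a field with $\operatorname{char}k=0$ or $\operatorname{char}k>19$. Let $J$ be an Albert algebra over $k$ (a $27$-dimensional central simple exceptional Jordan algebra) with unit $e$, trace bilinear form $\langle\cdot,\cdot\rangle$ and cubic norm $\det$; let $\langle\cdot,\cdot,\cdot\rangle$ be the symmetric trilinear form with $\langle x,x,x\rangle=\det x$, and define the cross product $x\times y\in J$ by $\langle x\times y,z\rangle=3\langle x,y,z\rangle$ for all $z\in J$. The Brown algebra $W=\mathcal B(k,J)$ is the vector space $k\oplus J\oplus J\oplus k$, whose elements are written $\begin{pmatrix}\alpha&j\\ j'&\beta\end{pmatrix}$, with multiplication $\begin{pmatrix}\alpha_1&j_1\\ j_1'&\beta_1\end{pmatrix}\begin{pmatrix}\alpha_2&j_2\\ j_2'&\beta_2\end{pmatrix}=\begin{pmatrix}\alpha_1\alpha_2+\langle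 j_1,j_2'\rangle&\alpha_1j_2+\beta_2j_1+2j_1'\times j_2'\\ \alpha_2j_1'+\beta_1j_2'+2j_1\times j_2&\beta_1\beta_2+\langle j_2,j_1'\rangle\end{pmatrix}$ and involution $x\mapsto\bar x$ swapping $\alpha$ and $\beta$. Put $\{x,y,z\}=(x\bar y)z+(z\bar y)x-(z\bar x)y$ and $s_0=\begin{pmatrix}1&0\\0&-1\end{pmatrix}$. The symplectic form $\omega$ on $W$ is defined by $\omega(x,y)1_W=(x\bar y-y\bar x)s_0$; explicitly $\omega\big((\alpha_1,j_1,j_1',\beta_1),(\alpha_2,j_2,j_2',\beta_2)\big)=\alpha_1\beta_2-\alpha_2\beta_1+\langle j_1,j_2'\rangle-\langle j_1',j_2\rangle$. The triple product is $t(x,y,z)=2\{x,s_0y,z\}-\omega(y,z)x-\omega(y,x)z-\omega(x,z)y$. For $x,y\in W$ let $x\wedge y\in\operatorname{End}(W)$ be $a\mapsto\omega(x,a)y-\omega(y,a)x$, and $L_{x,y}\in\operatorname{End}(W)$ be $a\mapsto t(x,y,a)$. Define $f'(a\wedge b,c\wedge d)=\omega(a,c)\omega(b,d)-\omega(a,d)\omega(b,c)$, extended bilinearly. $\sigma(V)=\{\sum_i a_i\wedge b_i\mid\sum_i\omega(a_i,b_i)=0\}$. The product $\odot_2$ on $\operatorname{span}_k\{a\wedge b\mid a,b\in W\}$ is $a\wedge b\odot_2 c\wedge d=L_{a,c}\bullet L_{b,d}-L_{a,d}\bullet L_{b,c}+\frac{11}{28}f'(a\wedge b,c\wedge d)\mathrm{id}_W$,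 with $F\bullet H=\frac12(FH+HF)$; it maps $\sigma(V)\times\sigma(V)$ into $\sigma(V)$. *)

(* Defs.v *)
From mathcomp Require Import all_boot all_algebra.
Set Implicit Arguments. Unset Strict Implicit. Unset Printing Implicit Defensive.
Import GRing.Theory.
Local Open Scope ring_scope.

(* Split Albert algebra over k (the unique Albert algebra when k is
   algebraically closed), realised as the first Tits construction
   J = M_3(k) x M_3(k) x M_3(k), element ((a0, a1), a2), with generic
   trace bilinear form and cubic norm
     <x,y>  = tr(a0 b0) + tr(a1 b2) + tr(a2 b1)
     det x  = det a0 + det a1 + det a2 - tr(a0 a1 a2). *)
Notation Alb k := ('M[k]_3 * 'M[k]_3 * 'M[k]_3)%type.

Section Defs.
Variable k : fieldType.

Definition alb_tr (x y : Alb k) : k :=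
  \tr (x.1.1 *m y.1.1) + \tr (x.1.2 *m y.2) + \tr (x.2 *m y.1.2).

Definition alb_det (x : Alb k) : k :=
  \det x.1.1 + \det x.1.2 + \det x.2 - \tr (x.1.1 *m x.1.2 *m x.2).

(* symmetric trilinear form with <x,x,x> = det x (polarisation; char k <> 2,3) *)
Definition alb_tri (x y z : Alb k) : k :=
  (alb_det (x + y + z) - alb_det (x + y) - alb_det (x + z) - alb_det (y + z)
   + alb_det x + alb_det y + alb_det z) / 6%:R.

Definition is_cross (cr : Alb k -> Alb k -> Alb k) : Prop :=
  forall x y z, alb_tr (cr x y) z = 3%:R * alb_tri x y z.

(* Brown algebra W = k + J + J + k, element (((alpha, j), j'), beta) *)
Notation W := (k^o * Alb k * Alb k * k^o)%type.

Definition bα (x : W) : k := x.1.1.1.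
Definition bj (x : W) : Alb k := x.1.1.2.
Definition bj' (x : W) : Alb k := x.1.2.
Definition bβ (x : W) : k := x.2.
Definition mkW (a : k) (j j' : Alb k) (b : k) : W := (((a : k^o), j, j'), (b : k^o)).

Variable cr : Alb k -> Alb k -> Alb k.

Definition brown_mul (x y : W) : W :=
  mkW (bα x * bα y + alb_tr (bj x) (bj' y))
      (bα x *: bj y + bβ y *: bj x + 2%:R *: cr (bj' x) (bj' y))
      (bα y *: bj' x + bβ x *: bj' y + 2%:R *: cr (bj x) (bj y))
      (bβ x * bβ y + alb_tr (bj y) (bj' x)).

Definition brown_bar (x : W) : W := mkW (bβ x) (bj x) (bj' x) (bα x).

Definition brown_trip (x y z : W) : W :=
  brown_mul (brown_mul x (brown_bar y)) z + brown_mul (brown_mul z (brown_bar y)) x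
  - brown_mul (brown_mul z (brown_bar x)) y.

Definition s0 : W := mkW 1 0 0 (-1).

Definition omega (x y : W) : k :=
  bα x * bβ y - bα y * bβ x + alb_tr (bj x) (bj' y) - alb_tr (bj' x) (bj y).

Definition tprod (x y z : W) : W :=
  2%:R *: brown_trip x (brown_mul s0 y) z
  - omega y z *: x - omega y x *: z - omega x z *: y.

Definition wedge (x y : W) : W -> W := fun a => omega x a *: y - omega y a *: x.

Definition Lop (x y : W) : W -> W := fun a => tprod x y a.

Definition jprod (F H : W -> W) : W -> W := fun a => 2%:R^-1 *: (F (H a) + H (F a)).

Definition fprime (p q : W * W) : k :=
  omega p.1 q.1 * omega p.2 q.2 - omega p.1 q.2 * omega p.2 q.1.

Definition odot_pair (p q : W * W) : W -> W := fun a =>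
  jprod (Lop p.1 q.1) (Lop p.2 q.2) a - jprod (Lop p.1 q.2) (Lop p.2 q.1) a
  + (11%:R / 28%:R * fprime p q) *: a.

(* Elements of span{a /\ b} are given by formal sums (lists of pairs). *)
Definition wsum (u : seq (W * W)) : W -> W :=
  fun a => \sum_(p <- u) wedge p.1 p.2 a.

Definition odot2 (u v : seq (W * W)) : W -> W :=
  fun a => \sum_(p <- u) \sum_(q <- v) odot_pair p q a.

Definition in_sigma (u : seq (W * W)) : Prop := \sum_(p <- u) omega p.1 p.2 = 0.

Definition is_linW (D : W -> W) : Prop :=
  forall (c : k) (x y : W), D (c *: x + y) = c *: D x + D y.

Definition is_sp (D : W -> W) : Prop :=
  is_linW D /\ forall x y, omega (D x) y + omega x (D y) = 0.

Definition is_Sp (g : W -> W) : Prop :=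
  is_linW g /\ bijective g /\ forall x y, omega (g x) (g y) = omega x y.

Definition Dact (D : W -> W) (u : seq (W * W)) : seq (W * W) :=
  [seq (D p.1, p.2) | p <- u] ++ [seq (p.1, D p.2) | p <- u].

Definition gact (g : W -> W) (u : seq (W * W)) : seq (W * W) :=
  [seq (g p.1, g p.2) | p <- u].

End Defs.

Notation Brown k := (k^o * Alb k * Alb k * k^o)%type.

(* Main.v *)
Require Import Defs.
From mathcomp Require Import all_boot all_algebra.
From mathcomp Require Import ring.
Import GRing.Theory.
Local Open Scope ring_scope.
Set Implicit Arguments. Unset Strict Implicit.

Definition i0 : 'I_3 := @Ordinal 3 0 isT.
Definition i1 : 'I_3 := @Ordinal 3 1 isT.
Definition i2 : 'I_3 := @Ordinal 3 2 isT.

Lemma tr3 (k : fieldType) (A : 'M[k]_3) : \tr A = A i0 i0 + A i1 i1 + A i2 i2.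
Proof. rewrite /mxtrace !big_ord_recr big_ord0 /= add0r.
 by congr (_ + _ + _); congr (A _ _); apply: val_inj. Qed.

Lemma mul3 (k : fieldType) (A B : 'M[k]_3) i j :
  (A *m B) i j = A i i0 * B i0 j + A i i1 * B i1 j + A i i2 * B i2 j.
Proof. rewrite mxE !big_ord_recr big_ord0 /= add0r.
 by congr (_ + _ + _); congr (A _ _ * B _ _); apply: val_inj. Qed.

Lemma ord3P (P : 'I_3 -> Prop) : P i0 -> P i1 -> P i2 -> forall i, P i.
Proof.
move=> h0 h1 h2 [[|[|[|n]]] hn].
- by have -> : Ordinal hn = i0 by apply: val_inj.
- by have -> : Ordinal hn = i1 by apply: val_inj.
- by have -> : Ordinal hn = i2 by apply: val_inj.
- by [].
Qed.

Lemma tr_delta (k : fieldType) (A : 'M[k]_3) i j : \tr (A *m delta_mx j i) = A i j.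
Proof.
elim/ord3P: i; elim/ord3P: j; rewrite tr3 !mul3 !mxE /=; ring.
Qed.

Lemma det3 (k : fieldType) (A : 'M[k]_3) : \det A =
  A i0 i0 * (A i1 i1 * A i2 i2 - A i1 i2 * A i2 i1)
  - A i0 i1 * (A i1 i0 * A i2 i2 - A i1 i2 * A i2 i0)
  + A i0 i2 * (A i1 i0 * A i2 i1 - A i1 i1 * A i2 i0).
Proof.
rewrite (expand_det_row A ord0) !big_ord_recr big_ord0 /= add0r /cofactor.
rewrite !(expand_det_row _ ord0) !big_ord_recr big_ord0 /= !add0r /cofactor.
rewrite !det_mx11 !mxE.
set B := fun m n : nat => A (inord m) (inord n).
have hA : forall x y, A x y = B x y by move=> x y; rewrite /B !inord_val.
rewrite !hA /=.
rewrite !big_ord0 !add0r /bump /=.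
ring.
Qed.

Definition E3 {k : fieldType} : Alb k := (delta_mx i0 i0, 0, 0).

Section Comp.
Variable k : fieldType.
Implicit Types (x y : Brown k) (c : k).
Lemma bαD x y : bα (x + y) = bα x + bα y. Proof. by []. Qed.
Lemma bjD x y : bj (x + y) = bj x + bj y. Proof. by []. Qed.
Lemma bj'D x y : bj' (x + y) = bj' x + bj' y. Proof. by []. Qed.
Lemma bβD x y : bβ (x + y) = bβ x + bβ y. Proof. by []. Qed.
Lemma bαN x : bα (- x) = - bα x. Proof. by []. Qed.
Lemma bjN x : bj (- x) = - bj x. Proof. by []. Qed.
Lemma bj'N x : bj' (- x) = - bj' x. Proof. by []. Qed.
Lemma bβN x : bβ (- x) = - bβ x. Proof. by []. Qed.
Lemma bαZ c x : bα (c *: x) = c * bα x. Proof. by []. Qed.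
Lemma bjZ c x : bj (c *: x) = c *: bj x. Proof. by []. Qed.
Lemma bj'Z c x : bj' (c *: x) = c *: bj' x. Proof. by []. Qed.
Lemma bβZ c x : bβ (c *: x) = c * bβ x. Proof. by []. Qed.
Lemma bα0 : bα (0 : Brown k) = 0. Proof. by []. Qed.
Lemma bj0 : bj (0 : Brown k) = 0. Proof. by []. Qed.
Lemma bj'0 : bj' (0 : Brown k) = 0. Proof. by []. Qed.
Lemma bβ0 : bβ (0 : Brown k) = 0. Proof. by []. Qed.
Lemma bαW a j j' b : bα (mkW a j j' b : Brown k) = a. Proof. by []. Qed.
Lemma bjW a j j' b : bj (mkW a j j' b : Brown k) = j. Proof. by []. Qed.
Lemma bj'W a j j' b : bj' (mkW a j j' b : Brown k) = j'. Proof. by []. Qed.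
Lemma bβW a j j' b : bβ (mkW a j j' b : Brown k) = b. Proof. by []. Qed.
Lemma bαB x : bα (brown_bar x) = bβ x. Proof. by []. Qed.
Lemma bjB x : bj (brown_bar x) = bj x. Proof. by []. Qed.
Lemma bj'B x : bj' (brown_bar x) = bj' x. Proof. by []. Qed.
Lemma bβB x : bβ (brown_bar x) = bα x. Proof. by []. Qed.
Variable cr : Alb k -> Alb k -> Alb k.
Lemma bαM x y : bα (brown_mul cr x y) = bα x * bα y + alb_tr (bj x) (bj' y). Proof. by []. Qed.
Lemma bjM x y : bj (brown_mul cr x y) = bα x *: bj y + bβ y *: bj x + 2%:R *: cr (bj' x) (bj' y). Proof. by []. Qed.
Lemma bj'M x y : bj' (brown_mul cr x y) = bα y *: bj' x + bβ x *: bj' y + 2%:R *: cr (bj x) (bj y). Proof. by []. Qed.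
Lemma bβM x y : bβ (brown_mul cr x y) = bβ x * bβ y + alb_tr (bj y) (bj' x). Proof. by []. Qed.

Lemma Weq x y : bα x = bα y -> bj x = bj y -> bj' x = bj' y -> bβ x = bβ y -> x = y.
Proof. case: x => [[[? ?] ?] ?]; case: y => [[[? ?] ?] ?]; rewrite /bα /bj /bj' /bβ /=. by move=> -> -> -> ->. Qed.

Implicit Types (X Y : Alb k).
Lemma a0D X Y : (X + Y).1.1 = X.1.1 + Y.1.1. Proof. by []. Qed.
Lemma a1D X Y : (X + Y).1.2 = X.1.2 + Y.1.2. Proof. by []. Qed.
Lemma a2D X Y : (X + Y).2 = X.2 + Y.2. Proof. by []. Qed.
Lemma a0N X : (- X).1.1 = - X.1.1. Proof. by []. Qed.
Lemma a1N X : (- X).1.2 = - X.1.2. Proof. by []. Qed.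
Lemma a2N X : (- X).2 = - X.2. Proof. by []. Qed.
Lemma a0Z c X : (c *: X).1.1 = c *: X.1.1. Proof. by []. Qed.
Lemma a1Z c X : (c *: X).1.2 = c *: X.1.2. Proof. by []. Qed.
Lemma a2Z c X : (c *: X).2 = c *: X.2. Proof. by []. Qed.
Lemma a00 : (0 : Alb k).1.1 = 0. Proof. by []. Qed.
Lemma a10 : (0 : Alb k).1.2 = 0. Proof. by []. Qed.
Lemma a20 : (0 : Alb k).2 = 0. Proof. by []. Qed.

Lemma Aeq X Y : (forall i j, X.1.1 i j = Y.1.1 i j) -> (forall i j, X.1.2 i j = Y.1.2 i j) ->
  (forall i j, X.2 i j = Y.2 i j) -> X = Y.
Proof.
case: X => [[X0 X1] X2]; case: Y => [[Y0 Y1] Y2] /= h0 h1 h2.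
have e0 : X0 = Y0 by apply/matrixP.
have e1 : X1 = Y1 by apply/matrixP.
have e2 : X2 = Y2 by apply/matrixP.
by rewrite e0 e1 e2.
Qed.

Lemma AeqE X Y : (forall i j, X.1.1 i j = Y.1.1 i j) -> (forall i j, X.1.2 i j = Y.1.2 i j) ->
  (forall i j, X.2 i j = Y.2 i j) -> X = Y.
Proof. move=> h0 h1 h2; apply: Aeq; elim/ord3P; elim/ord3P; by []. Qed.

Lemma alb_trE X Y : alb_tr X Y =
  \tr (X.1.1 *m Y.1.1) + \tr (X.1.2 *m Y.2) + \tr (X.2 *m Y.1.2).
Proof. by []. Qed.

Lemma alb_tr0l Y : alb_tr 0 Y = 0.
Proof. by rewrite /alb_tr /= !mul0mx !mxtrace0 !addr0. Qed.
Lemma alb_tr0r X : alb_tr X 0 = 0.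
Proof. by rewrite /alb_tr /= !mulmx0 !mxtrace0 !addr0. Qed.

Lemma alb_nd X : (forall Z, alb_tr X Z = 0) -> X = 0.
Proof.
case: X => [[X0 X1] X2] h.
have e0 : X0 = 0.
  apply/matrixP => i j; have := h (delta_mx j i, 0, 0).
  by rewrite /alb_tr /= !mulmx0 !mxtrace0 !addr0 tr_delta mxE.
have e1 : X1 = 0.
  apply/matrixP => i j; have := h (0, 0, delta_mx j i).
  by rewrite /alb_tr /= !mulmx0 !mxtrace0 addr0 add0r tr_delta mxE.
have e2 : X2 = 0.
  apply/matrixP => i j; have := h (0, delta_mx j i, 0).
  by rewrite /alb_tr /= !mulmx0 !mxtrace0 !add0r tr_delta mxE.
by rewrite e0 e1 e2.
Qed.

Lemma alb_det0 : alb_det (0 : Alb k) = 0.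
Proof. by rewrite /alb_det /= det0 !mul0mx mxtrace0 !addr0 subr0. Qed.

Lemma alb_tri_x0 X Z : alb_tri X 0 Z = 0.
Proof.
rewrite /alb_tri !addr0 add0r alb_det0.
set a := alb_det (X + Z); set b := alb_det X; set c := alb_det Z.
by rewrite (_ : _ + c = 0) ?mul0r //; ring.
Qed.
Lemma alb_tri_0x Y Z : alb_tri 0 Y Z = 0.
Proof.
rewrite /alb_tri !add0r alb_det0.
set a := alb_det (Y + Z); set b := alb_det Y; set c := alb_det Z.
by rewrite (_ : _ + c = 0) ?mul0r //; ring.
Qed.

Hypothesis hcr : is_cross cr.
Lemma cr0r X : cr X 0 = 0.
Proof. apply: alb_nd => Z; by rewrite hcr alb_tri_x0 mulr0. Qed.
Lemma cr0l Y : cr 0 Y = 0.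
Proof. apply: alb_nd => Z; by rewrite hcr alb_tri_0x mulr0. Qed.
End Comp.

Fact W4_key : unit. Proof. exact: tt. Qed.
Definition W4 {k : fieldType} a j j' b : Brown k := locked_with W4_key (mkW a j j' b).
Lemma W4E (k : fieldType) a j j' b : W4 a j j' b = mkW a j j' b :> Brown k.
Proof. by rewrite /W4 unlock. Qed.

Section MkW.
Variable k : fieldType.
Lemma mkWD a j j' b a2 j2 j2' b2 : (W4 a j j' b : Brown k) + W4 a2 j2 j2' b2 = W4 (a + a2) (j + j2) (j' + j2') (b + b2).
Proof. by rewrite !W4E. Qed.
Lemma mkWN a j j' b : - (W4 a j j' b : Brown k) = W4 (- a) (- j) (- j') (- b).
Proof. by rewrite !W4E. Qed.
Lemma mkWZ (c : k) a j j' b : c *: (W4 a j j' b : Brown k) = W4 (c * a) (c *: j) (c *: j') (c * b).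
Proof. by rewrite !W4E. Qed.
Lemma mkWB a j j' b : brown_bar (W4 a j j' b : Brown k) = W4 b j j' a.
Proof. by rewrite !W4E. Qed.
Lemma mkW0 : (0 : Brown k) = W4 0 0 0 0.
Proof. by rewrite !W4E. Qed.
Lemma W4eq a j j' b a2 j2 j2' b2 : a = a2 -> j = j2 -> j' = j2' -> b = b2 -> (W4 a j j' b : Brown k) = W4 a2 j2 j2' b2.
Proof. by move=> -> -> -> ->. Qed.
Lemma mkWeta (x : Brown k) : x = W4 (bα x) (bj x) (bj' x) (bβ x).
Proof. by rewrite W4E; case: x => [[[? ?] ?] ?]. Qed.
Lemma omegaW a j j' b a2 j2 j2' b2 : omega (W4 a j j' b : Brown k) (W4 a2 j2 j2' b2) =
  a * b2 - a2 * b + alb_tr j j2' - alb_tr j' j2.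
Proof. by rewrite !W4E. Qed.
Variable cr : Alb k -> Alb k -> Alb k.
Lemma mkWM a j j' b a2 j2 j2' b2 : brown_mul cr (W4 a j j' b : Brown k) (W4 a2 j2 j2' b2) =
  W4 (a * a2 + alb_tr j j2') (a *: j2 + b2 *: j + 2%:R *: cr j' j2')
      (a2 *: j' + b *: j2' + 2%:R *: cr j j2) (b * b2 + alb_tr j2 j').
Proof. by rewrite !W4E. Qed.
End MkW.

Section V4.
Variable k : fieldType.
Variable cr : Alb k -> Alb k -> Alb k.
Hypothesis hcr : is_cross cr.

Lemma alb_trEE (x y : k) : alb_tr (x *: E3) (y *: E3) = x * y.
Proof. rewrite alb_trE !tr3 !mul3 /E3 /= !mxE /=; ring. Qed.

Lemma det_d (s : k) (Z : 'M[k]_3) : \det (s *: delta_mx i0 i0 + Z) =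
  \det Z + s * (Z i1 i1 * Z i2 i2 - Z i1 i2 * Z i2 i1).
Proof. rewrite !det3 !mxE /=; ring. Qed.
Lemma det_d0 (s : k) : \det (s *: delta_mx i0 i0 : 'M[k]_3) = 0.
Proof. rewrite det3 !mxE /=; ring. Qed.
Lemma tr_d (s : k) (Z Z1 Z2 : 'M[k]_3) : \tr ((s *: delta_mx i0 i0 + Z) *m Z1 *m Z2) =
  \tr (Z *m Z1 *m Z2) + s * (Z1 *m Z2) i0 i0.
Proof. rewrite !tr3 !mul3 !mxE /=; ring. Qed.

Lemma alb_triEE (x y : k) Z : alb_tri (x *: E3) (y *: E3) Z = 0.
Proof.
case: Z => [[Z0 Z1] Z2].
rewrite /alb_tri /alb_det !(a0D, a1D, a2D, a0Z, a1Z, a2Z) /E3 /=.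
rewrite ?scaler0 ?add0r -!scalerDl !det_d !det_d0 !tr_d ?mulmx0 ?mxtrace0 ?det0; ring.
Qed.

Lemma crEE (x y : k) : cr (x *: E3) (y *: E3) = 0.
Proof. apply: alb_nd => Z; by rewrite hcr alb_triEE mulr0. Qed.

Definition V4 (a b c d : k) : Brown k := W4 a (b *: E3) (c *: E3) d.

Lemma V4D a b c d a' b' c' d' : V4 a b c d + V4 a' b' c' d' = V4 (a + a') (b + b') (c + c') (d + d').
Proof. by rewrite /V4 mkWD !scalerDl. Qed.
Lemma V4N a b c d : - V4 a b c d = V4 (- a) (- b) (- c) (- d).
Proof. by rewrite /V4 mkWN !scaleNr. Qed.
Lemma V4Z x a b c d : x *: V4 a b c d = V4 (x * a) (x * b) (x * c) (x * d).
Proof. by rewrite /V4 mkWZ !scalerA. Qed.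
Lemma V4B a b c d : brown_bar (V4 a b c d) = V4 d b c a.
Proof. by rewrite /V4 mkWB. Qed.
Lemma V4O a b c d a' b' c' d' : omega (V4 a b c d) (V4 a' b' c' d') = a * d' - a' * d + b * c' - c * b'.
Proof. by rewrite /V4 omegaW !alb_trEE. Qed.
Lemma V4M a b c d a' b' c' d' : brown_mul cr (V4 a b c d) (V4 a' b' c' d') =
  V4 (a * a' + b * c') (a * b' + d' * b) (a' * c + d * c') (d * d' + b' * c).
Proof.
rewrite /V4 mkWM !alb_trEE !crEE !scaler0 !addr0 !scalerA -!scalerDl.
by congr W4; ring.
Qed.
Lemma V4eq a b c d a' b' c' d' : a = a' -> b = b' -> c = c' -> d = d' -> V4 a b c d = V4 a' b' c' d'.
Proof. by move=> -> -> -> ->. Qed.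
Lemma V4bα a b c d : bα (V4 a b c d) = a. Proof. by rewrite /V4 W4E. Qed.
End V4.

Lemma V4bβ (k : fieldType) (a b c d : k) : bβ (V4 a b c d) = d. Proof. by rewrite /V4 W4E. Qed.
Lemma s0V (k : fieldType) : s0 k = V4 1 0 0 (-1).
Proof. by rewrite /s0 /V4 !scale0r W4E. Qed.

Lemma tprodV4 (k : fieldType) cr (hcr : is_cross cr) (x1 x2 x3 x4 y1 y2 y3 y4 z1 z2 z3 z4 : k) :
  tprod cr (V4 x1 x2 x3 x4) (V4 y1 y2 y3 y4) (V4 z1 z2 z3 z4) =
  V4 (- 2%:R * x1 * y1 * z4 + x1 * y2 * z3 + x1 * y3 * z2 - 2%:R * x1 * y4 * z1 + x2 * y1 * z3 + x2 * y3 * z1 + x3 * y1 * z2 + x3 * y2 * z1 - 2%:R * x4 * y1 * z1)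
     (x1 * y2 * z4 + x1 * y4 * z2 + x2 * y1 * z4 - 2%:R * x2 * y2 * z3 - 2%:R * x2 * y3 * z2 + x2 * y4 * z1 - 2%:R * x3 * y2 * z2 + x4 * y1 * z2 + x4 * y2 * z1)
     (- x1 * y3 * z4 - x1 * y4 * z3 + 2%:R * x2 * y3 * z3 - x3 * y1 * z4 + 2%:R * x3 * y2 * z3 + 2%:R * x3 * y3 * z2 - x3 * y4 * z1 - x4 * y1 * z3 - x4 * y3 * z1)
     (2%:R * x1 * y4 * z4 - x2 * y3 * z4 - x2 * y4 * z3 - x3 * y2 * z4 - x3 * y4 * z2 + 2%:R * x4 * y1 * z4 - x4 * y2 * z3 - x4 * y3 * z2 + 2%:R * x4 * y4 * z1).
Proof.
rewrite /tprod /brown_trip s0V !(V4M hcr, V4B, V4D, V4N, V4Z, V4O).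
apply: V4eq; ring.
Qed.

Lemma part1_val (k : fieldType) cr (hcr : is_cross cr) (n2 : (2%:R : k) != 0) (n28 : (28%:R : k) != 0) :
  let D := fun x : Brown k => V4 (bβ x) 0 0 0 in
  let u := [:: (V4 0 1 0 0, V4 0 0 0 1)] in
  let v := [:: (V4 0 0 1 0, V4 0 0 0 1)] in
  bα (odot2 cr (Dact D u) v (V4 1 0 0 0) + odot2 cr u (Dact D v) (V4 1 0 0 0)) = - 4%:R.
Proof.
move=> D u v.
rewrite /odot2 /Dact /u /v /D /= !V4bβ.
rewrite !big_cons !big_nil !addr0.
rewrite /odot_pair /jprod /Lop /fprime /=.
have h1 : tprod cr (V4 0 0 0 1) (V4 0 0 0 1) (V4 1 0 0 0) = (V4 0 0 0 2%:R) by rewrite (tprodV4 hcr); apply: V4eq; ring.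
have h2 : tprod cr (V4 0 0 0 0) (V4 0 0 1 0) (V4 0 0 0 2%:R) = (V4 0 0 0 0) by rewrite (tprodV4 hcr); apply: V4eq; ring.
have h3 : tprod cr (V4 0 0 0 0) (V4 0 0 1 0) (V4 1 0 0 0) = (V4 0 0 0 0) by rewrite (tprodV4 hcr); apply: V4eq; ring.
have h4 : tprod cr (V4 0 0 0 1) (V4 0 0 0 1) (V4 0 0 0 0) = (V4 0 0 0 0) by rewrite (tprodV4 hcr); apply: V4eq; ring.
have h5 : tprod cr (V4 0 0 0 1) (V4 0 0 1 0) (V4 1 0 0 0) = (V4 0 0 (- 1%:R) 0) by rewrite (tprodV4 hcr); apply: V4eq; ring.
have h6 : tprod cr (V4 0 0 0 0) (V4 0 0 0 1) (V4 0 0 (- 1%:R) 0) = (V4 0 0 0 0) by rewrite (tprodV4 hcr); apply: V4eq; ring.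
have h7 : tprod cr (V4 0 0 0 0) (V4 0 0 0 1) (V4 1 0 0 0) = (V4 0 0 0 0) by rewrite (tprodV4 hcr); apply: V4eq; ring.
have h8 : tprod cr (V4 0 0 0 1) (V4 0 0 1 0) (V4 0 0 0 0) = (V4 0 0 0 0) by rewrite (tprodV4 hcr); apply: V4eq; ring.
have h9 : tprod cr (V4 1 0 0 0) (V4 0 0 0 1) (V4 1 0 0 0) = (V4 (- 2%:R) 0 0 0) by rewrite (tprodV4 hcr); apply: V4eq; ring.
have h10 : tprod cr (V4 0 1 0 0) (V4 0 0 1 0) (V4 (- 2%:R) 0 0 0) = (V4 (- 2%:R) 0 0 0) by rewrite (tprodV4 hcr); apply: V4eq; ring.
have h11 : tprod cr (V4 0 1 0 0) (V4 0 0 1 0) (V4 1 0 0 0) = (V4 1 0 0 0) by rewrite (tprodV4 hcr); apply: V4eq; ring.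
have h12 : tprod cr (V4 1 0 0 0) (V4 0 0 1 0) (V4 1 0 0 0) = (V4 0 0 0 0) by rewrite (tprodV4 hcr); apply: V4eq; ring.
have h13 : tprod cr (V4 0 1 0 0) (V4 0 0 0 1) (V4 0 0 0 0) = (V4 0 0 0 0) by rewrite (tprodV4 hcr); apply: V4eq; ring.
have h14 : tprod cr (V4 0 1 0 0) (V4 0 0 0 1) (V4 1 0 0 0) = (V4 0 1 0 0) by rewrite (tprodV4 hcr); apply: V4eq; ring.
have h15 : tprod cr (V4 1 0 0 0) (V4 0 0 1 0) (V4 0 1 0 0) = (V4 1 0 0 0) by rewrite (tprodV4 hcr); apply: V4eq; ring.
have h16 : tprod cr (V4 0 1 0 0) (V4 0 0 0 0) (V4 0 0 0 2%:R) = (V4 0 0 0 0) by rewrite (tprodV4 hcr); apply: V4eq; ring.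
have h17 : tprod cr (V4 0 1 0 0) (V4 0 0 0 0) (V4 1 0 0 0) = (V4 0 0 0 0) by rewrite (tprodV4 hcr); apply: V4eq; ring.
have h18 : tprod cr (V4 0 0 0 1) (V4 0 0 0 0) (V4 1 0 0 0) = (V4 0 0 0 0) by rewrite (tprodV4 hcr); apply: V4eq; ring.
have h19 : tprod cr (V4 0 0 0 1) (V4 0 0 0 0) (V4 0 1 0 0) = (V4 0 0 0 0) by rewrite (tprodV4 hcr); apply: V4eq; ring.
have h20 : tprod cr (V4 0 0 0 1) (V4 1 0 0 0) (V4 1 0 0 0) = (V4 (- 2%:R) 0 0 0) by rewrite (tprodV4 hcr); apply: V4eq; ring.
have h21 : tprod cr (V4 0 1 0 0) (V4 1 0 0 0) (V4 0 0 (- 1%:R) 0) = (V4 (- 1%:R) 0 0 0) by rewrite (tprodV4 hcr); apply: V4eq; ring.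
have h22 : tprod cr (V4 0 1 0 0) (V4 1 0 0 0) (V4 1 0 0 0) = (V4 0 0 0 0) by rewrite (tprodV4 hcr); apply: V4eq; ring.
rewrite ?(h1, h2, h3, h4, h5, h6, h7, h8, h9, h10, h11, h12, h13, h14, h15, h16, h17, h18, h19, h20, h21, h22).
rewrite !(V4O) !(bαD, bαN, bαZ) !V4bα.
field.
by rewrite n28 n2.
Qed.


Lemma part2_val (k : fieldType) cr (hcr : is_cross cr) (n2 : (2%:R : k) != 0) (n28 : (28%:R : k) != 0) :
  let g := fun x : Brown k => x + V4 (bβ x) 0 0 0 in
  let u := [:: (V4 0 1 0 0, V4 0 0 0 1)] in
  let v := [:: (V4 0 0 1 0, V4 0 0 0 1)] in
  bα (odot2 cr (gact g u) (gact g v) (V4 1 0 0 0)) = - 4%:R.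
Proof.
move=> g u v.
rewrite /odot2 /gact /u /v /g /= !V4bβ !V4D ?addr0 ?add0r.
rewrite !big_cons !big_nil !addr0.
rewrite /odot_pair /jprod /Lop /fprime /=.
have h1 : tprod cr (V4 1 0 0 1) (V4 1 0 0 1) (V4 1 0 0 0) = (V4 (- 4%:R) 0 0 2%:R) by rewrite (tprodV4 hcr); apply: V4eq; ring.
have h2 : tprod cr (V4 0 1 0 0) (V4 0 0 1 0) (V4 (- 4%:R) 0 0 2%:R) = (V4 (- 4%:R) 0 0 (- 2%:R)) by rewrite (tprodV4 hcr); apply: V4eq; ring.
have h3 : tprod cr (V4 0 1 0 0) (V4 0 0 1 0) (V4 1 0 0 0) = (V4 1 0 0 0) by rewrite (tprodV4 hcr); apply: V4eq; ring.
have h4 : tprod cr (V4 1 0 0 1) (V4 0 0 1 0) (V4 1 0 0 0) = (V4 0 0 (- 1%:R) 0) by rewrite (tprodV4 hcr); apply: V4eq; ring.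
have h5 : tprod cr (V4 0 1 0 0) (V4 1 0 0 1) (V4 0 0 (- 1%:R) 0) = (V4 (- 1%:R) 0 0 1) by rewrite (tprodV4 hcr); apply: V4eq; ring.
have h6 : tprod cr (V4 0 1 0 0) (V4 1 0 0 1) (V4 1 0 0 0) = (V4 0 1 0 0) by rewrite (tprodV4 hcr); apply: V4eq; ring.
have h7 : tprod cr (V4 1 0 0 1) (V4 0 0 1 0) (V4 0 1 0 0) = (V4 1 0 0 (- 1%:R)) by rewrite (tprodV4 hcr); apply: V4eq; ring.
rewrite ?(h1, h2, h3, h4, h5, h6, h7).
rewrite !(V4O) !(bαD, bαN, bαZ) !V4bα.
field.
by rewrite n28 n2.
Qed.

Ltac zs k hcr := rewrite ?((@scale0r k (Alb k)), (@scaler0 k (Alb k)), (@addr0 (Alb k)), (@add0r (Alb k)),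
  (@addr0 k), (@add0r k), (@mul0r k), (@mulr0 k), (@oppr0 k), (@oppr0 (Alb k)), (@subr0 k), (@subr0 (Alb k)),
  (@sub0r k), (@sub0r (Alb k)), (@scale1r k (Alb k)),
  (@mul1r k), (@mulr1 k), cr0l hcr, cr0r hcr, (@alb_tr0l k), (@alb_tr0r k)).
Ltac zs1 k hcr := rewrite ?(@scale0r k (Alb k)) ?(@scaler0 k (Alb k)) ?(@mul0r k) ?(@mulr0 k) ?(@alb_tr0l k) ?(@alb_tr0r k) ?(@addr0 (Alb k)) ?(@add0r (Alb k)) ?(@addr0 k) ?(@add0r k) ?(@oppr0 k) ?(@oppr0 (Alb k)) ?(@subr0 k) ?(@subr0 (Alb k)) ?(@sub0r k) ?(@sub0r (Alb k)) ?(cr0l hcr) ?(cr0r hcr).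
Ltac zs2 k hcr := repeat progress zs1 k hcr.
Ltac wn := rewrite ?(mkWD, mkWN, mkWZ, mkWB, mkWM, omegaW).
Ltac fin := rewrite ?alb_trE ?tr3 ?mul3 ?(a0D, a1D, a2D, a0N, a1N, a2N, a0Z, a1Z, a2Z, a00, a10, a20) /E3 /= ?mxE /=; ring.

Lemma bαW4 (k : fieldType) a j j' b : bα (W4 a j j' b : Brown k) = a. Proof. by rewrite W4E. Qed.
Lemma bj'W4 (k : fieldType) a j j' b : bj' (W4 a j j' b : Brown k) = j'. Proof. by rewrite W4E. Qed.

Lemma L44 (k : fieldType) cr (hcr : is_cross cr) (a : Brown k) :
  tprod cr (V4 0 0 0 1) (V4 0 0 0 1) a = V4 0 0 0 (2%:R * bα a).
Proof.
rewrite /tprod /brown_trip /s0 /V4 -!W4E [a]mkWeta.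
wn. rewrite bαW4. apply: W4eq. all: zs2 k hcr. all: try done. all: fin.
Qed.

Lemma alb_trE3 (k : fieldType) (x : k) : alb_tr E3 (x *: E3) = x.
Proof. rewrite alb_trE !tr3 !mul3 /E3 /= !mxE /=; ring. Qed.

Lemma Lpq_a (k : fieldType) cr (hcr : is_cross cr) (a : Brown k) :
  bα (tprod cr (V4 0 1 0 0) (V4 0 0 1 0) a) = bα a.
Proof.
rewrite /tprod /brown_trip /s0 /V4 -!W4E [a]mkWeta.
wn. rewrite !bαW4. zs2 k hcr. fin.
Qed.

Lemma Lp4 (k : fieldType) cr (hcr : is_cross cr) (a : Brown k) :
  tprod cr (V4 0 1 0 0) (V4 0 0 0 1) a = V4 0 (bα a) 0 (- alb_tr E3 (bj' a)).
Proof.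
rewrite /tprod /brown_trip /s0 /V4 -!W4E [a]mkWeta.
wn. rewrite bαW4 bj'W4. apply: W4eq. all: zs2 k hcr. all: try done. all: try fin.
all: apply: AeqE => i j; fin.
Qed.

Lemma L4q_a (k : fieldType) cr (hcr : is_cross cr) (a : Brown k) :
  bα (tprod cr (V4 0 0 0 1) (V4 0 0 1 0) a) = 0.
Proof.
rewrite /tprod /brown_trip /s0 /V4 -!W4E [a]mkWeta.
wn. rewrite !bαW4. zs2 k hcr. fin.
Qed.

Lemma L4q_j' (k : fieldType) cr (hcr : is_cross cr) (a : Brown k) :
  bj' (tprod cr (V4 0 0 0 1) (V4 0 0 1 0) a) = (- bα a) *: E3.
Proof.
rewrite /tprod /brown_trip /s0 /V4 -!W4E [a]mkWeta.
wn. rewrite !bj'W4 bαW4. zs2 k hcr. apply: AeqE => i j; fin.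
Qed.


Lemma V40 (k : fieldType) : (0 : Brown k) = V4 0 0 0 0.
Proof. by rewrite /V4 !scale0r mkW0. Qed.

Lemma Tzero (k : fieldType) cr (hcr : is_cross cr) (a : Brown k) :
  odot_pair cr (V4 0 1 0 0, V4 0 0 0 1) (V4 0 0 1 0, V4 0 0 0 1) a = 0.
Proof.
rewrite /odot_pair /jprod /Lop /fprime /=.
rewrite !(L44 hcr) (Lpq_a hcr) !(Lp4 hcr) (L4q_a hcr) (L4q_j' hcr) alb_trE3.
rewrite !(tprodV4 hcr) !V4O.
rewrite [X in X *: a](_ : _ = 0); last by ring.
rewrite scale0r addr0 ?(V4D, V4N, V4Z) V40.
apply: V4eq; ring.
Qed.

Lemma natr_nz (k : fieldType) (hchar : forall p : nat, p \in [pchar k] -> (19 < p)%N) (p : nat) :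
  prime p -> (p <= 19)%N -> (p%:R : k) != 0.
Proof.
move=> pp ple; apply/negP => /eqP h.
have : p \in [pchar k] by rewrite inE /= pp h eqxx.
by move/hchar; rewrite ltnNge ple.
Qed.

Lemma bjV4 (k : fieldType) (a b c d : k) : bj (V4 a b c d) = b *: E3. Proof. by rewrite /V4 W4E. Qed.
Lemma bj'V4 (k : fieldType) (a b c d : k) : bj' (V4 a b c d) = c *: E3. Proof. by rewrite /V4 W4E. Qed.

Ltac cmp := rewrite ?(bαD, bjD, bj'D, bβD, bαN, bjN, bj'N, bβN, bαZ, bjZ, bj'Z, bβZ,
  bα0, bj0, bj'0, bβ0, V4bα, V4bβ, bjV4, bj'V4).
Ltac fin2 := rewrite ?alb_trE ?tr3 ?mul3 ?(a0D, a1D, a2D, a0N, a1N, a2N, a0Z, a1Z, a2Z, a00, a10, a20) /E3 /= ?mxE /=; ring.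
Ltac wsolve := apply: Weq; cmp; [fin2 | apply: AeqE => i j; fin2 | apply: AeqE => i j; fin2 | fin2].

Lemma zm (V : zmodType) (A B C E : V) : - A - B + (C - - E) = C - B - (A - E).
Proof. by rewrite opprK opprB -!addrA [E - A]addrC [- B + (- A + E)]addrCA [C + (- A + _)]addrCA [C + (- B + E)]addrCA. Qed.

Section Lin.
Variables (k : fieldType) (F : Brown k -> Brown k).
Hypothesis hl : is_linW F.
Lemma F0 : F 0 = 0.
Proof.
have h := hl 1 0 0; rewrite scaler0 addr0 scale1r in h.
have : F 0 + F 0 - F 0 = F 0 - F 0 by rewrite -h.
by rewrite addrK subrr.
Qed.
Lemma FD x y : F (x + y) = F x + F y.
Proof. by have := hl 1 x y; rewrite !scale1r. Qed.
Lemma FZ c x : F (c *: x) = c *: F x.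
Proof. by have := hl c x 0; rewrite !addr0 F0 addr0. Qed.
Lemma FN x : F (- x) = - F x.
Proof. by rewrite -scaleN1r FZ scaleN1r. Qed.
End Lin.

Lemma wsum_Dact (k : fieldType) (D : Brown k -> Brown k) (hD : is_sp D) w x :
  wsum (Dact D w) x = D (wsum w x) - wsum w (D x).
Proof.
case: hD => hl hs.
rewrite /wsum /Dact big_cat !big_map /=.
rewrite (big_morph D (FD hl) (F0 hl)) -sumrB -big_split /=.
apply: eq_bigr => p _; rewrite /wedge.
rewrite (FD hl) (FN hl) !(FZ hl).
have o1 : omega (D p.1) x = - omega p.1 (D x) by apply/eqP; rewrite -addr_eq0 hs.
have o2 : omega (D p.2) x = - omega p.2 (D x) by apply/eqP; rewrite -addr_eq0 hs.
rewrite o1 o2 !scaleNr; exact: zm.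
Qed.

Lemma D_sp (k : fieldType) : is_sp (fun x : Brown k => V4 (bβ x) 0 0 0).
Proof.
split.
- move=> c x y; wsolve.
- move=> x y; rewrite /omega; cmp; rewrite ?scale0r ?addr0 ?subr0 ?alb_tr0l ?alb_tr0r; ring.
Qed.

Definition gW (k : fieldType) (x : Brown k) := x + V4 (bβ x) 0 0 0.

Lemma g_lin (k : fieldType) : is_linW (@gW k).
Proof. move=> c x y; rewrite /gW; wsolve. Qed.

Lemma g_Sp (k : fieldType) : is_Sp (@gW k).
Proof.
split; first exact: g_lin.
split.
- exists (fun x => x - V4 (bβ x) 0 0 0) => x; rewrite /gW; wsolve.
- move=> x y; rewrite /gW /omega; cmp; rewrite ?scale0r ?addr0 ?subr0 ?alb_tr0l ?alb_tr0r; ring.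
Qed.

Lemma g_om (k : fieldType) (a : Brown k) : omega (gW a) (V4 1 0 0 0) = omega a (V4 1 0 0 0).
Proof. rewrite /gW /omega; cmp; rewrite ?scale0r ?addr0 ?subr0 ?alb_tr0l ?alb_tr0r; ring. Qed.

Lemma wsum_gact (k : fieldType) w :
  wsum (gact (@gW k) w) (V4 1 0 0 0) = gW (wsum w (V4 1 0 0 0)).
Proof.
have hl := @g_lin k.
rewrite /wsum /gact big_map (big_morph _ (FD hl) (F0 hl)).
apply: eq_bigr => p _; rewrite /wedge /= !g_om.
by rewrite (FD hl) (FN hl) !(FZ hl).
Qed.


Theorem proposition4p1 (k : closedFieldType)
    (hchar : forall p : nat, p \in [pchar k] -> (19 < p)%N)
    (cr : Alb k -> Alb k -> Alb k) (hcr : is_cross cr) :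
  (exists (D : Brown k -> Brown k) (u v : seq (Brown k * Brown k)),
     [/\ is_sp D, in_sigma u, in_sigma v,
         exists w, wsum w =1 odot2 cr u v &
         forall w, wsum w =1 odot2 cr u v ->
           ~ (wsum (Dact D w) =1
                (fun a => odot2 cr (Dact D u) v a + odot2 cr u (Dact D v) a))])
  /\
  (exists (g : Brown k -> Brown k) (u v : seq (Brown k * Brown k)),
     [/\ is_Sp g, in_sigma u, in_sigma v,
         exists w, wsum w =1 odot2 cr u v &
         forall w, wsum w =1 odot2 cr u v ->
           ~ (wsum (gact g w) =1 odot2 cr (gact g u) (gact g v))]).
Proof.
have n2 : (2%:R : k) != 0 by apply: (natr_nz hchar).
have n7 : (7%:R : k) != 0 by apply: (natr_nz hchar).
have n28 : (28%:R : k) != 0 by rewrite (_ : 28 = 2 * 2 * 7)%N // !natrM !mulf_neq0.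
have n4 : (4%:R : k) != 0 by rewrite (_ : 4 = 2 * 2)%N // natrM mulf_neq0.
have Tz : forall a, odot2 cr [:: (V4 0 1 0 0, V4 0 0 0 1)] [:: (V4 0 0 1 0, V4 0 0 0 1)] a = 0.
  by move=> a; rewrite /odot2 !big_cons !big_nil !addr0 (Tzero hcr).
have sig1 : in_sigma [:: (V4 0 1 0 0, V4 0 0 0 1) : Brown k * Brown k].
  by rewrite /in_sigma big_cons big_nil /= V4O addr0; ring.
have sig2 : in_sigma [:: (V4 0 0 1 0, V4 0 0 0 1) : Brown k * Brown k].
  by rewrite /in_sigma big_cons big_nil /= V4O addr0; ring.
have w0 : exists w, wsum w =1 odot2 cr [:: (V4 0 1 0 0, V4 0 0 0 1)] [:: (V4 0 0 1 0, V4 0 0 0 1)].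
  by exists [::] => a; rewrite Tz /wsum big_nil.
split.
- exists (fun x : Brown k => V4 (bβ x) 0 0 0), [:: (V4 0 1 0 0, V4 0 0 0 1)], [:: (V4 0 0 1 0, V4 0 0 0 1)].
  split => //; first exact: D_sp.
  move=> w hw heq.
  have P1 := part1_val hcr n2 n28; cbv zeta in P1.
  have h := heq (V4 1 0 0 0); cbv beta in h.
  rewrite wsum_Dact in h; last exact: D_sp.
  rewrite !hw !Tz in h.
  move: h => /(congr1 (@bα k)); rewrite P1 subr0 V4bα bβ0 => /eqP.
  by rewrite eq_sym oppr_eq0 (negbTE n4).
- exists (fun x : Brown k => x + V4 (bβ x) 0 0 0), [:: (V4 0 1 0 0, V4 0 0 0 1)], [:: (V4 0 0 1 0, V4 0 0 0 1)].
  split => //; first exact: g_Sp.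
  move=> w hw heq.
  have P2 := part2_val hcr n2 n28; cbv zeta in P2.
  have G := @wsum_gact k w; rewrite /gW in G.
  have h := heq (V4 1 0 0 0).
  rewrite G !hw !Tz in h.
  move: h => /(congr1 (@bα k)); rewrite P2 bαD V4bα bβ0 addr0 => /eqP.
  by rewrite eq_sym oppr_eq0 (negbTE n4).
Qed.
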